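(* Let $\mathbf{X}=\mathbf{D}_1\boldsymbol{\Gamma}_1$ with $\boldsymbol{\Gamma}_1\neq 0$, and $\mathbf{Y}=\mathbf{X}+\mathbf{E}$ with $\|\mathbf{E}\|_{2,\infty}^{p}\le\epsilon_0$. Let $|\Gamma_1^{\min}|$ and $|\Gamma_1^{\max}|$ be the smallest and largest absolute values of the nonzero entries of $\boldsymbol{\Gamma}_1$. Let $\hat{\boldsymbol{\Gamma}}_1=\mathcal{S}_{\beta_1}(\mathbf{D}_1^T\mathbf{Y})$. Assume (a) $\|\boldsymbol{\Gamma}_1\|_{0,\infty}^{s}<\tfrac12\Big(1+\tfrac{1}{\mu(\mathbf{D}_1)}\tfrac{|\Gamma_1^{\min}|}{|\Gamma_1^{\max}|}\Big)-\tfrac{1}{\mu(\mathbf{D}_1)}\tfrac{\epsilon_0}{|\Gamma_1^{\max}|}$; and (b) $|\Gamma_1^{\min}|-(\|\boldsymbol{\Gamma}_1\|_{0,\infty}^{s}-1)\mu(\mathbf{D}_1)|\Gamma_1^{\max}|-\epsilon_0>\beta_1>\|\boldsymbol{\Gamma}_1\|_{0,\infty}^{s}\mu(\mathbf{D}_1)|\Gamma_1^{\max}|+\epsilon_0$. Then (1) the support of $\hat{\boldsymbol{\Gamma}}_1$ equals that of $\boldsymbol{\Gamma}_1$; and (2) $\|\boldsymbol{\Gamma}_1-\hat{\boldsymbol{\Gamma}}_1\|_{2,\infty}^{p}\le\sqrt{\|\boldsymbol{\Gamma}_1\|_{0,\infty}^{p}}\,\big(\epsilon_0+\mu(\mathb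f{D}_1)(\|\boldsymbol{\Gamma}_1\|_{0,\infty}^{s}-1)|\Gamma_1^{\max}|+\beta_1\big)$.
   Context: Setting. Signals are one-dimensional of length $N$ with periodic boundary conditions; $m_0=1$, $\boldsymbol{\Gamma}_0=\mathbf{X}$. For $i\ge1$, $\boldsymbol{\Gamma}_i\in\mathbb{R}^{Nm_i}$ has entry $km_i+r$ equal to the coefficient of filter $r$ at spatial shift $k$. $\mathbf{D}_i\in\mathbb{R}^{Nm_{i-1}\times Nm_i}$ is a (stride) convolutional dictionary whose column $km_i+r$ is local filter $r$ (length $n_{i-1}m_{i-1}$) placed cyclically on entries $km_{i-1},\dots,km_{i-1}+n_{i-1}m_{i-1}-1$, zero elsewhere; $\mathbf{D}_1\in\mathbb{R}^{N\times Nm_1}$ consists of all cyclic shifts of $m_1$ filters of length $n_0$. Columns have unit $\ell_2$ norm; $\mu(\mathbf{D})=\max_{i\neq j}|\mathbf{d}_i^T\mathbf{d}_j|$. Stripes: $\mathbf{S}_{i,j}\boldsymbol{\Gamma}_i$ is the subvector of $\boldsymbol{\Gamma}_i$ at spatial shifts $k\in\{j-n_{i-1}+1,\dots,j+n_{i-1}-1\}$ (mod $N$), all channels; $\|\boldsymbol{\Gamma}_i\|_{0,\infty}^{s}=\max_j\|\mathbf{S}_{i,j}\boldsymbol{\Gamma}_i\|_0$. Patches: for $i\ge0$, $\mathbf{P}_{i,j}\mathbf{V}$ extracts from $\mathbf{V}\in\mathbb{R}^{Nm_i}$ the cyclically contiguous subvector at spatial shifts $j,\dots,j+n_i-1$,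 all channels (length $n_im_i$); $\|\mathbf{V}\|_{2,\infty}^{p}=\max_j\|\mathbf{P}_{i,j}\mathbf{V}\|_2$, $\|\mathbf{V}\|_{0,\infty}^{p}=\max_j\|\mathbf{P}_{i,j}\mathbf{V}\|_0$. Soft thresholding: $\mathcal{S}_\beta$ acts entrywise, $\mathcal{S}_\beta(z)=z+\beta$ if $z<-\beta$, $0$ if $|z|\le\beta$, $z-\beta$ if $z>\beta$. *)

(* Defs.v *)
From HB Require Import structures.
From mathcomp Require Import all_boot all_order all_algebra.
Unset Printing Implicit Defensive.
Import Order.TTheory GRing.Theory Num.Theory Num.Def.
Local Open Scope ring_scope.

Section Defs.
Context {R : rcfType}.

Definition cv_at {len : nat} (V : 'cV[R]_len) (i : nat) : R :=
  if insub i is Some i' then V i' 0 else 0.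

Definition mx_at {a b : nat} (A : 'M[R]_(a, b)) (r t : nat) : R :=
  match insub r, insub t with Some r', Some t' => A r' t' | _, _ => 0 end.

(* D_1 in R^{N x N m}: column k*m+r is filter r (row r of f, length n0)
   placed cyclically on entries k, ..., k+n0-1 (mod N), zero elsewhere. *)
Definition conv_dict (N : nat) {m n0 : nat} (f : 'M[R]_(m, n0)) : 'M[R]_(N, N * m) :=
  \matrix_(p < N, i < N * m)
    (let k := (i %/ m)%N in let r := (i %% m)%N in
     let d := ((p + N - k) %% N)%N in
     if (d < n0)%N then mx_at f r d else 0).

Definition coherence {a b : nat} (D : 'M[R]_(a, b)) : R :=
  \big[maxr/0]_(i < b) \big[maxr/0]_(j < b | j != i) `|(D^T *m D) i j|.

(* stripe l0,inf norm: Gamma in R^{N m}, stripes of half-width n (spatial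
   shifts j-n+1 .. j+n-1 mod N, all channels) *)
Definition in_stripe (N n k j : nat) : bool :=
  let d := ((k + N - j) %% N)%N in (d < n)%N || (N - d < n)%N.

Definition stripe_l0inf (N m n : nat) (G : 'cV[R]_(N * m)) : nat :=
  \max_(j < N) #|[set i : 'I_(N * m) | (G i ord0 != 0%R) && in_stripe N n (i %/ m) j]|.

Definition patch_entry (N m : nat) {len : nat} (V : 'cV[R]_len) (j t r : nat) : R :=
  cv_at V (((j + t) %% N) * m + r)%N.

Definition patch_l2inf (N m n : nat) {len : nat} (V : 'cV[R]_len) : R :=
  \big[maxr/0]_(j < N)
     Num.sqrt (\sum_(t < n) \sum_(r < m) (patch_entry N m V j t r) ^+ 2).

Definition patch_l0inf (N m n : nat) {len : nat} (V : 'cV[R]_len) : nat :=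
  \max_(j < N) \sum_(t < n) \sum_(r < m) (patch_entry N m V j t r != 0%R : nat).

Definition soft (b z : R) : R :=
  if z < - b then z + b else if b < z then z - b else 0.

Definition absmax {len : nat} (G : 'cV[R]_len) : R :=
  \big[maxr/0]_(i < len) `|G i 0|.
Definition absmin {len : nat} (G : 'cV[R]_len) : R :=
  \big[minr/absmax G]_(i < len | G i 0 != 0) `|G i 0|.

End Defs.

(* Main.v *)
Require Import Defs.
From HB Require Import structures.
From mathcomp Require Import all_boot all_order all_algebra.
From mathcomp Require Import zify ring lra.
Import Order.TTheory GRing.Theory Num.Theory Num.Def.
Local Open Scope ring_scope.

Lemma modsubE (N x y : nat) : (x < N)%N -> (y < N)%N ->
  ((x + N - y) %% N = if (y <= x)%N then x - y else x + N - y)%N.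
Proof.
move=> xN yN; case: leqP => yx.
  have -> : (x + N - y = (x - y) + N)%N by lia.
  by rewrite modnDr modn_small //; lia.
by rewrite modn_small //; lia.
Qed.

Lemma modaddE (N x y : nat) : (x < N)%N -> (y < N)%N ->
  ((x + y) %% N = if (x + y < N)%N then x + y else x + y - N)%N.
Proof.
move=> xN yN; case: ltnP => h; first by rewrite modn_small.
have -> : (x + y = (x + y - N) + N)%N by lia.
by rewrite modnDr modn_small //; lia.
Qed.

Lemma overlap (N n a b p : nat) : (a < N)%N -> (b < N)%N -> (p < N)%N ->
  ((p + N - a) %% N < n)%N -> ((p + N - b) %% N < n)%N -> in_stripe N n b a.
Proof.
move=> aN bN pN; rewrite /in_stripe !modsubE //.
by case: (leqP a p); case: (leqP b p); case: (leqP a b); lia.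
Qed.

Lemma self_stripe (N n a : nat) : (0 < n)%N -> (a < N)%N -> in_stripe N n a a.
Proof. by move=> n0 aN; rewrite /in_stripe modsubE // leqnn subnn n0. Qed.

Lemma rot_back (N k u : nat) : (k < N)%N -> (u < N)%N ->
  (((k + u) %% N + N - k) %% N = u)%N.
Proof.
move=> kN uN; have qN : ((k + u) %% N < N)%N by rewrite ltn_pmod //; lia.
rewrite modsubE // modaddE //; case: ltnP => h; case: leqP; lia.
Qed.
Section S.
Variable R : rcfType.

Lemma cs1 n (a b : 'I_n -> R) : \sum_i a i ^+ 2 = 1 ->
  (\sum_i a i * b i) ^+ 2 <= \sum_i b i ^+ 2.
Proof.
move=> Ha; set t := \sum_i a i * b i.
have H0 : 0 <= \sum_i (b i - t * a i) ^+ 2.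
  by apply: sumr_ge0 => i _; exact: sqr_ge0.
have E : \sum_i (b i - t * a i) ^+ 2 = \sum_i b i ^+ 2 - t ^+ 2.
  rewrite (eq_bigr (fun i => b i ^+ 2 - (2 * t) * (a i * b i) + t ^+ 2 * a i ^+ 2)); last by move=> i _; ring.
  rewrite !big_split /= sumrN -!mulr_sumr Ha -/t; ring.
lra.
Qed.

Lemma cv_atE len (V : 'cV[R]_len) (i : 'I_len) : cv_at V i = V i 0.
Proof. by rewrite /cv_at valK. Qed.

Lemma window_sum (N n0 : nat) (Npos : (0 < N)%N) (le : (n0 <= N)%N) (k : nat)
  (kN : (k < N)%N) (F : 'I_N -> R) :
  (forall p : 'I_N, ~~ ((p + N - k) %% N < n0)%N -> F p = 0) ->
  \sum_(p < N) F p = \sum_(u < n0) F (Ordinal (ltn_pmod (k + widen_ord le u) Npos)).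
Proof.
move=> HF.
rewrite (reindex_inj (h := fun u : 'I_N => Ordinal (ltn_pmod (k + u) Npos))).
  rewrite (bigID (fun u : 'I_N => (u < n0)%N)) /= [X in _ + X]big1 ?addr0.
    by rewrite big_ord_narrow.
  by move=> u hu; apply: HF; rewrite /= rot_back.
move=> u v /(f_equal (@nat_of_ord N)) /= /eqP; rewrite eqn_modDl !modn_small // => /eqP.
exact: val_inj.
Qed.
Arguments window_sum {N n0} Npos le {k} kN {F}.

Lemma D1E N m n0 (f : 'M[R]_(m, n0)) (p : 'I_N) (i : 'I_(N * m)) :
  conv_dict N f p i = if ((p + N - i %/ m) %% N < n0)%N
     then mx_at f (i %% m) ((p + N - i %/ m) %% N) else 0.
Proof. by rewrite mxE. Qed.

Lemma idx_facts N m (i : 'I_(N * m)) : (0 < N)%N /\ (0 < m)%N /\ (i %/ m < N)%N.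
Proof.
have h : (0 < N * m)%N by apply: leq_ltn_trans (ltn_ord i).
move: (h); rewrite muln_gt0 => /andP[hN hm]; do 2 split => //.
by rewrite ltn_divLR.
Qed.

Lemma noise_bound N m n0 (f : 'M[R]_(m, n0)) (E : 'cV[R]_N) eps0 (i : 'I_(N * m)) :
  (0 < n0)%N -> (n0 <= N)%N -> \sum_(p < N) (conv_dict N f p i) ^+ 2 = 1 ->
  patch_l2inf N 1 n0 E <= eps0 ->
  `|((conv_dict N f)^T *m E) i 0| <= eps0.
Proof.
move=> n0pos le Hn HE; have [Npos [mpos kN]] := @idx_facts N m i.
set k := (i %/ m)%N in kN.
have Z : forall p : 'I_N, ~~ ((p + N - k) %% N < n0)%N -> conv_dict N f p i = 0.
  by move=> p hp; rewrite D1E (negbTE hp).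
rewrite mxE (window_sum Npos le kN); last by move=> p hp; rewrite mxE Z ?mul0r.
set rot := fun u : 'I_n0 => Ordinal (ltn_pmod (k + widen_ord le u) Npos).
have Ha : \sum_(u < n0) conv_dict N f (rot u) i ^+ 2 = 1.
  by rewrite -Hn (window_sum Npos le kN) // => p hp; rewrite Z // expr0n.
have := @cs1 n0 (fun u => conv_dict N f (rot u) i) (fun u => E (rot u) 0) Ha.
move=> Hc.
have Hs : `|\sum_(u < n0) conv_dict N f (rot u) i * E (rot u) 0|
   <= Num.sqrt (\sum_(u < n0) E (rot u) 0 ^+ 2).
  rewrite -sqrtr_sqr ler_sqrt //; apply: sumr_ge0 => u _; exact: sqr_ge0.
under eq_bigr do rewrite mxE.
apply: le_trans Hs _; apply: le_trans HE.
rewrite /patch_l2inf; apply: le_trans (le_bigmax_cond _ _ (j := Ordinal kN) isT).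
rewrite /= ler_sqrt; last by apply: sumr_ge0 => t _; apply: sumr_ge0 => r _; exact: sqr_ge0.
rewrite le_eqVlt; apply/orP; left; apply/eqP/eq_bigr => t _; rewrite big_ord1 /patch_entry muln1 addn0.
by rewrite -(@cv_atE _ E (rot t)).
Qed.
End S.
Section T.
Variable R : rcfType.
Variables (N m n0 : nat) (f : 'M[R]_(m, n0)).
Hypothesis n0pos : (0 < n0)%N.
Hypothesis n0N : (n0 <= N)%N.
Let D := conv_dict N f.
Hypothesis Hnorm : forall i : 'I_(N * m), \sum_(p < N) (D p i) ^+ 2 = 1.

Lemma inner_zero (i j : 'I_(N * m)) :
  ~~ in_stripe N n0 (j %/ m) (i %/ m) -> (D^T *m D) i j = 0.
Proof.
move=> hs; rewrite mxE big1 // => p _; rewrite mxE /D !D1E.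
have [_ [_ iN]] := @idx_facts N m i; have [_ [_ jN]] := @idx_facts N m j.
case: ifP => hi; case: ifP => hj; rewrite ?mul0r ?mulr0 //.
by move: hs; rewrite (@overlap _ _ _ _ _ iN jN (ltn_ord p) hi hj).
Qed.

Lemma inner_diag (i : 'I_(N * m)) : (D^T *m D) i i = 1.
Proof. by rewrite mxE -(Hnorm i); apply: eq_bigr => p _; rewrite mxE expr2. Qed.

Lemma mu_ge (i j : 'I_(N * m)) : j != i -> `|(D^T *m D) i j| <= coherence D.
Proof.
move=> ji; rewrite /coherence.
apply: le_trans (le_bigmax_cond _ _ (j := i) isT).
exact: (le_bigmax_cond _ _ (j := j) ji).
Qed.

Lemma mu_ge0 : 0 <= coherence D.
Proof. exact: bigmax_ge_id. Qed.

Lemma gmax_ge (G : 'cV[R]_(N * m)) (j : 'I_(N * m)) : `|G j 0| <= absmax G.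
Proof. exact: (le_bigmax_cond _ _ (j := j) isT). Qed.

Lemma gmax_ge0 (G : 'cV[R]_(N * m)) : 0 <= absmax G.
Proof. exact: bigmax_ge_id. Qed.

Lemma gmin_le (G : 'cV[R]_(N * m)) (j : 'I_(N * m)) : G j 0 != 0 -> absmin G <= `|G j 0|.
Proof. by move=> h; exact: (bigmin_le_cond _ _ (j := j) h). Qed.

Definition Aset (G : 'cV[R]_(N * m)) (i : 'I_(N * m)) :=
  [set j : 'I_(N * m) | (G j ord0 != 0) && in_stripe N n0 (j %/ m) (i %/ m)].

Lemma interf (G : 'cV[R]_(N * m)) (i : 'I_(N * m)) :
  `|\sum_(j | j != i) (D^T *m D) i j * G j 0|
    <= (#|Aset G i :\ i|)%:R * (coherence D * absmax G).
Proof.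
apply: le_trans (ler_norm_sum _ _ _) _.
apply: (@le_trans _ _ (\sum_(j | j != i)
   (if j \in Aset G i then coherence D * absmax G else 0))).
  apply: ler_sum => j ji; rewrite normrM inE.
  case: eqP => [-> | /eqP gj] /=; first by rewrite normr0 mulr0 ?eqxx.
  case: ifP => hs.
    by apply: ler_pM => //; [exact: mu_ge | exact: gmax_ge].
  by rewrite inner_zero ?hs // normr0 mul0r.
rewrite -big_mkcondr /= mulr_natl -sumr_const.
by rewrite (eq_bigl (fun j => j \in Aset G i :\ i)) // => j; rewrite in_setD1.
Qed.

Lemma count_bound (G : 'cV[R]_(N * m)) (i : 'I_(N * m)) :
  (#|Aset G i :\ i| + (G i ord0 != 0%R) <= stripe_l0inf N m n0 G)%N.
Proof.
have [_ [_ iN]] := @idx_facts N m i.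
have -> : (#|Aset G i :\ i| + (G i ord0 != 0%R) = #|Aset G i|)%N.
  rewrite (cardsD1 i (Aset G i)) addnC; congr (_ + _)%N.
  by rewrite inE (@self_stripe N n0 _ n0pos iN) andbT.
by apply: (@leq_bigmax_cond _ _ _ (Ordinal iN)).
Qed.

Lemma entry_bound (G : 'cV[R]_(N * m)) (E : 'cV[R]_N) eps0 (i : 'I_(N * m)) :
  patch_l2inf N 1 n0 E <= eps0 ->
  `|(D^T *m (D *m G + E)) i 0 - G i 0|
    <= (#|Aset G i :\ i|)%:R * (coherence D * absmax G) + eps0.
Proof.
move=> HE.
rewrite mulmxDr mulmxA mxE [(D^T *m D *m G) i 0]mxE (bigD1 i) //= inner_diag mul1r.
have := interf G i; have := @noise_bound R N m n0 f E eps0 i n0pos n0N (Hnorm i) HE.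
set a := \sum_(j | _) _; set b := (_ *m E) i 0 => h1 h2.
have -> : G i 0 + a + b - G i 0 = a + b by ring.
apply: le_trans (ler_normD _ _) _; exact: lerD.
Qed.
End T.
Section U.
Variable R : rcfType.

Lemma soft_dist (b z : R) : 0 <= b -> `|z - soft b z| <= b.
Proof.
move=> b0; rewrite /soft; case: ltP => h1.
  have -> : z - (z + b) = - b by ring.
  by rewrite normrN ger0_norm.
case: ltP => h2.
  have -> : z - (z - b) = b by ring.
  by rewrite ger0_norm.
rewrite subr0; case: (lerP 0 z) => hz; [rewrite ger0_norm // | rewrite ltr0_norm //]; lra.
Qed.

Lemma soft_nz (b z : R) : 0 <= b -> (soft b z != 0) = (b < `|z|).
Proof.
move=> b0; rewrite /soft.
case: (lerP 0 z) => hz; [rewrite ger0_norm // | rewrite ltr0_norm //].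
  case: ltP => h1; first lra.
  case: ltP => h2; last by rewrite eqxx.
  by apply/negP => /eqP; lra.
case: ltP => h1.
  have hb : b < - z by lra.
  by rewrite hb; apply/negP => /eqP; lra.
case: ltP => h2; first lra.
by rewrite eqxx; apply/esym/negbTE; rewrite -leNgt; lra.
Qed.
End U.
Theorem lemma2 (R : rcfType) (N m1 n0 n1 : nat)
  (f : 'M[R]_(m1, n0)) (G1 : 'cV[R]_(N * m1)) (X Y E : 'cV[R]_N)
  (eps0 beta1 : R) :
  (0 < n0)%N -> (n0 <= N)%N ->
  let D1 := conv_dict N f in
  (forall i : 'I_(N * m1), \sum_(p < N) (D1 p i) ^+ 2 = 1) ->
  X = D1 *m G1 -> G1 != 0 ->
  Y = X + E -> patch_l2inf N 1 n0 E <= eps0 ->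
  let mu := coherence D1 in
  let s := (stripe_l0inf N m1 n0 G1)%:R : R in
  let gmin := absmin G1 in
  let gmax := absmax G1 in
  let G1hat := map_mx (soft beta1) (D1^T *m Y) in
  s < 2^-1 * (1 + mu^-1 * (gmin / gmax)) - mu^-1 * (eps0 / gmax) ->
  gmin - (s - 1) * mu * gmax - eps0 > beta1 ->
  beta1 > s * mu * gmax + eps0 ->
  (forall i : 'I_(N * m1), (G1hat i 0 != 0) = (G1 i 0 != 0)) /\
  patch_l2inf N m1 n1 (G1 - G1hat)
    <= Num.sqrt ((patch_l0inf N m1 n1 G1)%:R) * (eps0 + mu * (s - 1) * gmax + beta1).
Proof.
move=> n0pos n0N D1 Hnorm HX HG HY HE mu s gmin gmax G1hat Ha Hb1 Hb2.
have mu0 : 0 <= mu := @mu_ge0 R N m1 n0 f.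
have gm0 : 0 <= gmax := @gmax_ge0 R N m1 G1.
have e0 : 0 <= eps0 by apply: le_trans HE; exact: bigmax_ge_id.
have s0 : 0 <= s by rewrite /s ler0n.
have mg0 : 0 <= mu * gmax by rewrite mulr_ge0.
have b0 : 0 <= beta1.
  have : 0 <= s * mu * gmax by rewrite -mulrA mulr_ge0.
  lra.
have key : forall i : 'I_(N * m1),
  (G1 i 0 != 0 -> `|(D1^T *m Y) i 0 - G1 i 0| <= (s - 1) * mu * gmax + eps0) /\
  (G1 i 0 = 0 -> `|(D1^T *m Y) i 0| <= s * mu * gmax + eps0).
  move=> i.
  have EB := @entry_bound R N m1 n0 f n0pos n0N Hnorm G1 E eps0 i HE.
  have CB := @count_bound R N m1 n0 n0pos G1 i.
  rewrite -/D1 -/mu -/gmax in EB.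
  rewrite HY HX.
  set c := #|_ :\ i| in EB CB.
  split.
    move=> gnz; have gnz' : G1 i ord0 != 0 := gnz.
    move: CB; rewrite gnz' addn1 => CB.
    have hc : c%:R <= s - 1.
      move: CB; rewrite -(ler_nat R) -addn1 natrD /s mulr1n => CB; lra.
    have := ler_wpM2r mg0 hc => h; move: h EB; rewrite /=; lra.
  move=> g0; have g0' : G1 i ord0 = 0 := g0.
  move: CB EB; rewrite g0' eqxx addn0 subr0 => CB EB.
  have hc : c%:R <= s by rewrite /s ler_nat.
  have := ler_wpM2r mg0 hc => h; move: h EB; rewrite /=; lra.
have [i0 gi0] : exists i, G1 i 0 != 0.
  case: (pickP (fun i => G1 i 0 != 0)) => [i0 h | h]; first by exists i0.
  case/eqP: HG; apply/matrixP => i j; rewrite (ord1 j) !mxE; apply/eqP.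
  by move: (h i) => /negbFE.
set B := eps0 + mu * (s - 1) * gmax + beta1.
have B0 : 0 <= B.
  have := (key i0).1 gi0; have := normr_ge0 ((D1^T *m Y) i0 0 - G1 i0 0).
  rewrite /B; lra.
split.
  move=> i; rewrite mxE soft_nz //.
  case: (G1 i 0 =P 0) => [g0 | /eqP gnz].
    rewrite /=; apply/negbTE; rewrite -leNgt.
    have := (key i).2 g0; lra.
  rewrite /=; set t := (D1^T *m Y) i 0.
  have h1 := (key i).1 gnz; have h2 := @gmin_le R N m1 G1 i gnz.
  have h3 : `|G1 i 0| <= `|t| + `|t - G1 i 0|.
    rewrite distrC; apply: le_trans (ler_normD t (G1 i 0 - t)).
    by rewrite [t + _]addrC subrK.
  rewrite -/gmin in h2; lra.
have pw : forall i : 'I_(N * m1), `|(G1 - G1hat) i 0| <= B /\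
    (G1 i 0 = 0 -> (G1 - G1hat) i 0 = 0).
  move=> i.
  have -> : (G1 - G1hat) i 0 = G1 i 0 - soft beta1 ((D1^T *m Y) i 0).
    by rewrite !mxE.
  set t := (D1^T *m Y) i 0.
  have hd := @soft_dist R beta1 t b0.
  case: (G1 i 0 =P 0) => [g0 | /eqP gnz].
    have hs : soft beta1 t = 0.
      apply/eqP/negbNE; rewrite (@soft_nz R beta1 t b0) -leNgt.
      have := (key i).2 g0; lra.
    by rewrite g0 hs subr0 normr0.
  split; last by move=> g0; rewrite g0 eqxx in gnz.
  have h1 := (key i).1 gnz.
  have -> : G1 i 0 - soft beta1 t = (t - soft beta1 t) - (t - G1 i 0) by ring.
  apply: le_trans (ler_normB _ _) _.
  rewrite /B; lra.
have pwc : forall idx : nat, `|cv_at (G1 - G1hat) idx| <= B /\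
    (cv_at G1 idx = 0 -> cv_at (G1 - G1hat) idx = 0).
  move=> idx; rewrite /cv_at; case: insubP => [i' _ _ | _]; first exact: pw.
  by rewrite normr0.
rewrite /patch_l2inf; apply: bigmax_le => [|j _]; first by rewrite mulr_ge0 ?sqrtr_ge0.
set cnt := (\sum_(t < n1) \sum_(r < m1) (patch_entry N m1 G1 j t r != 0%R : nat))%N.
have hs : \sum_(t < n1) \sum_(r < m1) patch_entry N m1 (G1 - G1hat) j t r ^+ 2
    <= cnt%:R * B ^+ 2.
  rewrite /cnt natr_sum mulr_suml; apply: ler_sum => t _.
  rewrite natr_sum mulr_suml; apply: ler_sum => r _.
  rewrite /patch_entry; have [h1 h2] := pwc (((j + t) %% N) * m1 + r)%N.
  case: eqP => [e|_].
    by rewrite h2 // expr2 mulr0 /= mul0r.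
  rewrite /= mul1r -real_normK ?num_real //.
  have := normr_ge0 (cv_at (G1 - G1hat) (((j + t) %% N) * m1 + r)); nra.
apply: (@le_trans _ _ (Num.sqrt (cnt%:R * B ^+ 2))).
  by rewrite ler_sqrt // mulr_ge0 ?ler0n ?sqr_ge0.
rewrite sqrtrM ?ler0n // sqrtr_sqr ger0_norm //; apply: ler_wpM2r => //.
rewrite ler_sqrt ?ler0n // ler_nat.
exact: (@leq_bigmax_cond _ _ _ j).
Qed.
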